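(* Let $E$ be a finite set and $\mathcal{A}$ a set-arrangement on $E$. For each $A\in\mathcal{A}$ let $R_A\subseteq[\mathcal{F}(A),\mathcal{F}(A)]$ and $L_A=\mathcal{F}(A)/\langle R_A\rangle$. Let $\mathcal{L}=\mathcal{F}(E)/\langle R\rangle$, where $$R=\bigcup_{A\in\mathcal{A}}R_A\ \cup\ \{[x,y]:\ x,y\in E,\ \{x,y\}\not\subseteq A \text{ for every } A\in\mathcal{A}\}.$$ For $A\in\mathcal{A}$ let $\pi_A:\mathcal{L}\to L_A$ be the Lie homomorphism sending each $x\in E\setminus A$ to $0$ and each $x\in A$ to itself, and let $s_A:L_A\to\mathcal{L}$ be the Lie homomorphism induced by the inclusion $A\subseteq E$ (so $\pi_A\circ s_A=\mathrm{id}_{L_A}$). Let $\pi_A'$ and $s_A'$ denote the restrictions to the derived algebras $\mathcal{L}'=[\mathcal{L},\mathcal{L}]$ and $L_A'=[L_A,L_A]$, and let $I$ be the kernel of the surjective Lie homomorphism $\pi=\bigoplus_{A\in\mathcal{A}}\pi_A':\mathcal{L}'\to\bigoplus_{A\in\mathcal{A}}L_A'$. Then $I=0$ if and only if $[x,s_A'(L_A')]=0$ in $\mathcal{L}$ for all $A\in\mathcal{A}$ and all $x\in E\setminus A$.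
   Context: All Lie algebras are over a fixed field. $\mathcal{F}(X)$ denotes the free Lie algebra on a set $X$, and $\langle S\rangle$ the ideal generated by $S$. A set-arrangement on a finite set $E$ is a set $\mathcal{A}$ of subsets of $E$ such that $|A|\ge 3$ for all $A\in\mathcal{A}$ and $|A\cap B|\le 1$ for all distinct $A,B\in\mathcal{A}$. In the claim, elements $x\in E$ are identified with their images in $\mathcal{L}$. *)

(* Defs.v *)
From mathcomp Require Import all_boot all_algebra.
Set Implicit Arguments. Unset Strict Implicit. Unset Printing Implicit Defensive.
Import GRing.Theory.
Local Open Scope ring_scope.

Inductive lterm (K : Type) (X : Type) : Type :=
| LVar of X
| LZero
| LAdd of lterm K X & lterm K X
| LScale of K & lterm K X
| LBr of lterm K X & lterm K X.
Arguments LVar {K X} x.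
Arguments LZero {K X}.
Arguments LAdd {K X} t u.
Arguments LScale {K X} k t.
Arguments LBr {K X} t u.

Fixpoint lsubst (K : Type) (X Y : Type) (f : X -> lterm K Y) (t : lterm K X) : lterm K Y :=
  match t with
  | LVar x => f x
  | LZero => LZero
  | LAdd t u => LAdd (lsubst f t) (lsubst f u)
  | LScale k t => LScale k (lsubst f t)
  | LBr t u => LBr (lsubst f t) (lsubst f u)
  end.

(* Congruence on terms whose quotient is F(X)/<Rel>: Lie algebra axioms over K,
   compatibility with operations, and the relations r ~ 0 for r in Rel
   (the ideal closure follows from compatibility with brackets). *)
Inductive lcong (K : fieldType) (X : Type) (Rel : lterm K X -> Prop)
  : lterm K X -> lterm K X -> Prop :=
| lc_refl t : lcong Rel t t
| lc_sym t u : lcong Rel t u -> lcong Rel u t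
| lc_trans t u v : lcong Rel t u -> lcong Rel u v -> lcong Rel t v
| lc_add t t' u u' : lcong Rel t t' -> lcong Rel u u' -> lcong Rel (LAdd t u) (LAdd t' u')
| lc_scale k t t' : lcong Rel t t' -> lcong Rel (LScale k t) (LScale k t')
| lc_br t t' u u' : lcong Rel t t' -> lcong Rel u u' -> lcong Rel (LBr t u) (LBr t' u')
| lc_addA t u v : lcong Rel (LAdd t (LAdd u v)) (LAdd (LAdd t u) v)
| lc_addC t u : lcong Rel (LAdd t u) (LAdd u t)
| lc_add0 t : lcong Rel (LAdd t LZero) t
| lc_scale1 t : lcong Rel (LScale 1 t) t
| lc_scale0 t : lcong Rel (LScale 0 t) LZero
| lc_scaleA k l t : lcong Rel (LScale k (LScale l t)) (LScale (k * l) t)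
| lc_scaleDr k t u : lcong Rel (LScale k (LAdd t u)) (LAdd (LScale k t) (LScale k u))
| lc_scaleDl k l t : lcong Rel (LScale (k + l) t) (LAdd (LScale k t) (LScale l t))
| lc_brDl t u v : lcong Rel (LBr (LAdd t u) v) (LAdd (LBr t v) (LBr u v))
| lc_brDr t u v : lcong Rel (LBr t (LAdd u v)) (LAdd (LBr t u) (LBr t v))
| lc_brZl k t u : lcong Rel (LBr (LScale k t) u) (LScale k (LBr t u))
| lc_brZr k t u : lcong Rel (LBr t (LScale k u)) (LScale k (LBr t u))
| lc_brtt t : lcong Rel (LBr t t) LZero
| lc_jacobi t u v :
    lcong Rel (LAdd (LAdd (LBr t (LBr u v)) (LBr u (LBr v t))) (LBr v (LBr t u))) LZero
| lc_rel r : Rel r -> lcong Rel r LZero.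

(* terms that are linear combinations of brackets: they represent exactly the
   elements of the derived algebra [L, L] of any quotient L of the free Lie algebra *)
Inductive derived (K : Type) (X : Type) : lterm K X -> Prop :=
| der_zero : derived LZero
| der_add t u : derived t -> derived u -> derived (LAdd t u)
| der_scale k t : derived t -> derived (LScale k t)
| der_br t u : derived (LBr t u).

(* no relations: the free Lie algebra F(X) *)
Definition norel (K : Type) (X : Type) : lterm K X -> Prop := fun _ => False.

Definition in_derived_free (K : fieldType) (X : Type) (r : lterm K X) : Prop :=
  exists t, derived t /\ lcong (@norel K X) r t.

Definition set_arrangement (E : finType) (Ar : {set {set E}}) : Prop :=
  (forall A, A \in Ar -> 3 <= #|A|)%N /\
  (forall A B, A \in Ar -> B \in Ar -> A != B -> #|A :&: B| <= 1)%N.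

Definition elems (E : finType) (A : {set E}) : Type := {x : E | x \in A}.

Definition sA (K : Type) (E : finType) (A : {set E}) (t : lterm K (elems A)) : lterm K E :=
  lsubst (fun x : elems A => LVar (sval x)) t.

Definition piA_var (K : Type) (E : finType) (A : {set E}) (x : E) : lterm K (elems A) :=
  match boolP (x \in A) with
  | AltTrue h => LVar (exist _ x h)
  | AltFalse _ => LZero
  end.

Definition piA (K : Type) (E : finType) (A : {set E}) (t : lterm K E) : lterm K (elems A) :=
  lsubst (@piA_var K E A) t.

Definition Rtot (K : Type) (E : finType) (Ar : {set {set E}})
  (RA : forall A : {set E}, lterm K (elems A) -> Prop) (r : lterm K E) : Prop :=
  (exists2 A, A \in Ar & exists2 r', RA A r' & r = sA r') \/
  (exists x y : E, (forall A, A \in Ar -> ~ (x \in A /\ y \in A)) /\ r = LBr (LVar x) (LVar y)).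

(* Main.v *)
Require Import Defs.
From mathcomp Require Import all_boot all_algebra.
From Stdlib Require Import Setoid Morphisms.
Set Implicit Arguments. Unset Strict Implicit. Unset Printing Implicit Defensive.
Import GRing.Theory.
Local Open Scope ring_scope.

#[export] Instance lcong_equiv (K : fieldType) (X : Type) (Rel : lterm K X -> Prop) :
  Equivalence (lcong Rel).
Proof. split; [exact: lc_refl | exact: lc_sym | exact: lc_trans]. Qed.

#[export] Instance LAdd_proper (K : fieldType) (X : Type) (Rel : lterm K X -> Prop) :
  Proper (lcong Rel ==> lcong Rel ==> lcong Rel) (@LAdd K X).
Proof. by move=> ? ? ? ? ? ?; apply: lc_add. Qed.
#[export] Instance LBr_proper (K : fieldType) (X : Type) (Rel : lterm K X -> Prop) :
  Proper (lcong Rel ==> lcong Rel ==> lcong Rel) (@LBr K X).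
Proof. by move=> ? ? ? ? ? ?; apply: lc_br. Qed.
#[export] Instance LScale_proper (K : fieldType) (X : Type) (Rel : lterm K X -> Prop) k :
  Proper (lcong Rel ==> lcong Rel) (@LScale K X k).
Proof. by move=> ? ? ?; apply: lc_scale. Qed.

Lemma l_br0l (K : fieldType) (X : Type) (Rel : lterm K X -> Prop) u :
  lcong Rel (LBr LZero u) LZero.
Proof.
transitivity (LBr (LScale 0 u) u); first by apply: lc_br; [symmetry; exact: lc_scale0|reflexivity].
rewrite lc_brZl. exact: lc_scale0.
Qed.

Lemma l_br0r (K : fieldType) (X : Type) (Rel : lterm K X -> Prop) u :
  lcong Rel (LBr u LZero) LZero.
Proof.
transitivity (LBr u (LScale 0 u)); first by apply: lc_br; [reflexivity|symmetry; exact: lc_scale0].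
rewrite lc_brZr. exact: lc_scale0.
Qed.

Lemma l_scaleZ (K : fieldType) (X : Type) (Rel : lterm K X -> Prop) k :
  lcong Rel (LScale k LZero) LZero.
Proof.
transitivity (LScale k (LScale 0 (@LZero K X))); first by apply: lc_scale; symmetry; exact: lc_scale0.
rewrite lc_scaleA mulr0. exact: lc_scale0.
Qed.

Lemma l_add0l (K : fieldType) (X : Type) (Rel : lterm K X -> Prop) t :
  lcong Rel (LAdd LZero t) t.
Proof. rewrite lc_addC. exact: lc_add0. Qed.

Lemma l_swap4 (K : fieldType) (X : Type) (Rel : lterm K X -> Prop) a b c d :
  lcong Rel (LAdd (LAdd a b) (LAdd c d)) (LAdd (LAdd a c) (LAdd b d)).
Proof.
rewrite -lc_addA (lc_addA Rel b) (lc_addC Rel b c) -(lc_addA Rel c) lc_addA.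
reflexivity.
Qed.

Lemma l_cancel (K : fieldType) (X : Type) (Rel : lterm K X -> Prop) a b :
  lcong Rel (LAdd a b) LZero -> lcong Rel a (LScale (-1) b).
Proof.
move=> H.
have Hb : lcong Rel (LAdd b (LScale (-1) b)) LZero.
  transitivity (LAdd (LScale 1 b) (LScale (-1) b)); first by apply: lc_add; [symmetry; exact: lc_scale1|reflexivity].
  rewrite -lc_scaleDl subrr. exact: lc_scale0.
transitivity (LAdd a LZero); first by symmetry; exact: lc_add0.
rewrite -Hb lc_addA H. exact: l_add0l.
Qed.

Lemma l_anti (K : fieldType) (X : Type) (Rel : lterm K X -> Prop) t u :
  lcong Rel (LBr t u) (LScale (-1) (LBr u t)).
Proof.
apply: l_cancel.
have := lc_brtt Rel (LAdd t u).
rewrite lc_brDl !lc_brDr !lc_brtt l_add0l lc_add0. done.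
Qed.

Lemma l_jacobi (K : fieldType) (X : Type) (Rel : lterm K X -> Prop) a b z :
  lcong Rel (LBr (LBr a b) z) (LAdd (LBr a (LBr b z)) (LBr b (LBr z a))).
Proof.
have H := lc_jacobi Rel a b z.
rewrite lc_addC in H.
have H2 := l_cancel H.
rewrite l_anti H2 lc_scaleA.
have -> : (-1 * -1 : K) = 1 by rewrite mulrNN mulr1.
exact: lc_scale1.
Qed.

Lemma lsubst_cong (K : fieldType) (X Y : Type) (Rel : lterm K X -> Prop)
  (Rel' : lterm K Y -> Prop) (f : X -> lterm K Y) :
  (forall r, Rel r -> lcong Rel' (lsubst f r) LZero) ->
  forall t u, lcong Rel t u -> lcong Rel' (lsubst f t) (lsubst f u).
Proof.
move=> Hr t u H; elim: H => /=; intros;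
  try solve [constructor; auto | econstructor; eauto | auto].
Qed.

Lemma lsubst_der (K X Y : Type) (f : X -> lterm K Y) t :
  derived t -> derived (lsubst f t).
Proof. elim=> /=; intros; constructor; auto. Qed.

Lemma lsubst_comp (K X Y Z : Type) (f : X -> lterm K Y) (g : Y -> lterm K Z) t :
  lsubst g (lsubst f t) = lsubst (fun x => lsubst g (f x)) t.
Proof. by elim: t => //= *; f_equal; auto. Qed.

Lemma lsubst_ext (K X Y : Type) (f g : X -> lterm K Y) t :
  (forall x, f x = g x) -> lsubst f t = lsubst g t.
Proof. by move=> H; elim: t => //= *; f_equal; auto. Qed.

Lemma lsubst_id (K X : Type) (t : lterm K X) : lsubst LVar t = t.
Proof. by elim: t => //= *; f_equal; auto. Qed.

Lemma onevar_scale (K : fieldType) (X Y : Type) (Rel : lterm K Y -> Prop)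
  (f : X -> lterm K Y) g :
  (forall x, f x = LZero \/ f x = g) ->
  forall t, exists c, lcong Rel (lsubst f t) (LScale c g).
Proof.
move=> Hf; elim=> /=.
- move=> x; case: (Hf x) => ->.
    by exists 0; symmetry; exact: lc_scale0.
  by exists 1; symmetry; exact: lc_scale1.
- by exists 0; symmetry; exact: lc_scale0.
- move=> t [c Hc] u [d Hd]; exists (c + d); rewrite Hc Hd lc_scaleDl; reflexivity.
- move=> k t [c Hc]; exists (k * c); rewrite Hc lc_scaleA; reflexivity.
- move=> t [c Hc] u [d Hd]; exists 0; rewrite Hc Hd lc_brZl lc_brZr lc_brtt !l_scaleZ.
  symmetry; exact: lc_scale0.
Qed.

Lemma onevar (K : fieldType) (X Y : Type) (Rel : lterm K Y -> Prop)
  (f : X -> lterm K Y) g :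
  (forall x, f x = LZero \/ f x = g) ->
  forall t, derived t -> lcong Rel (lsubst f t) LZero.
Proof.
move=> Hf t; elim=> /=.
- reflexivity.
- by move=> a b _ -> _ ->; exact: lc_add0.
- by move=> k a _ ->; exact: l_scaleZ.
- move=> a b.
  have [c ->] := onevar_scale Rel Hf a.
  have [d ->] := onevar_scale Rel Hf b.
  rewrite lc_brZl lc_brZr lc_brtt !l_scaleZ; reflexivity.
Qed.

Definition lsum (K X I : Type) (l : seq I) (f : I -> lterm K X) : lterm K X :=
  foldr (fun i acc => LAdd (f i) acc) LZero l.

Lemma lsubst_lsum (K X Y I : Type) (g : X -> lterm K Y) (l : seq I) f :
  lsubst g (lsum l f) = lsum l (fun i => lsubst g (f i)).
Proof. by elim: l => //= i l <-. Qed.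

Lemma lsum_ext_in (K : fieldType) (X : Type) (I : eqType) (Rel : lterm K X -> Prop)
  (l : seq I) f g :
  (forall i, i \in l -> lcong Rel (f i) (g i)) -> lcong Rel (lsum l f) (lsum l g).
Proof.
elim: l => [|i l IH] H /=; first reflexivity.
rewrite (H i (mem_head _ _)) IH; first reflexivity.
by move=> j Hj; apply: H; rewrite inE Hj orbT.
Qed.

Lemma lsum_zero (K : fieldType) (X : Type) (I : eqType) (Rel : lterm K X -> Prop)
  (l : seq I) f :
  (forall i, i \in l -> lcong Rel (f i) LZero) -> lcong Rel (lsum l f) LZero.
Proof.
elim: l => [|i l IH] H /=; first reflexivity.
rewrite (H i (mem_head _ _)) IH; first exact: lc_add0.
by move=> j Hj; apply: H; rewrite inE Hj orbT.
Qed.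

Lemma lsum_single (K : fieldType) (X : Type) (I : eqType) (Rel : lterm K X -> Prop)
  (l : seq I) f a :
  uniq l -> a \in l -> (forall i, i \in l -> i != a -> lcong Rel (f i) LZero) ->
  lcong Rel (lsum l f) (f a).
Proof.
elim: l => [|i l IH] //= /andP[il ul] al H.
case: (eqVneq i a) => [ia|ia].
  subst i; rewrite lsum_zero; first exact: lc_add0.
  move=> j jl; apply: H; first by rewrite inE jl orbT.
  by apply/eqP => ja; subst j; rewrite jl in il.
have al' : a \in l by move: al; rewrite inE eq_sym (negbTE ia).
have H' : forall j, j \in l -> j != a -> lcong Rel (f j) LZero.
  by move=> j jl; apply: H; rewrite inE jl orbT.
rewrite (H i (mem_head _ _) ia) l_add0l (IH ul al' H'); reflexivity.
Qed.

Lemma lsum_add (K : fieldType) (X I : Type) (Rel : lterm K X -> Prop) (l : seq I) f g :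
  lcong Rel (lsum l (fun i => LAdd (f i) (g i))) (LAdd (lsum l f) (lsum l g)).
Proof.
elim: l => [|i l IH] /=; first by symmetry; exact: lc_add0.
rewrite IH l_swap4; reflexivity.
Qed.

Lemma lsum_scale (K : fieldType) (X I : Type) (Rel : lterm K X -> Prop) (l : seq I) k f :
  lcong Rel (lsum l (fun i => LScale k (f i))) (LScale k (lsum l f)).
Proof.
elim: l => [|i l IH] /=; first by symmetry; exact: l_scaleZ.
rewrite IH lc_scaleDr; reflexivity.
Qed.

Lemma lsum_brl (K : fieldType) (X I : Type) (Rel : lterm K X -> Prop) (l : seq I) x f :
  lcong Rel (LBr x (lsum l f)) (lsum l (fun i => LBr x (f i))).
Proof.
elim: l => [|i l IH] /=; first exact: l_br0r.
rewrite lc_brDr IH; reflexivity.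
Qed.

Lemma piA_var_out (K : Type) (E : finType) (A : {set E}) x :
  x \notin A -> @piA_var K E A x = LZero.
Proof. move=> h; rewrite /piA_var; destruct (boolP (x \in A)) as [h'|h'] => //; by rewrite h' in h. Qed.

Lemma sA_piA_var (K : Type) (E : finType) (A : {set E}) x :
  x \in A -> sA (@piA_var K E A x) = LVar x.
Proof. move=> h; rewrite /piA_var; destruct (boolP (x \in A)) as [h'|h'] => //; by rewrite h in h'. Qed.

Lemma piA_var_val (K : Type) (E : finType) (A : {set E}) (a : elems A) :
  @piA_var K E A (sval a) = LVar a.
Proof.
case: a => x hx /=; rewrite /piA_var; destruct (boolP (x \in A)) as [h|h].
  by rewrite (bool_irrelevance h hx).
by rewrite hx in h.
Qed.

Lemma piA_sA (K : Type) (E : finType) (A B : {set E}) (t : lterm K (elems B)) :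
  piA A (sA t) = lsubst (fun a : elems B => piA_var K A (sval a)) t.
Proof. by rewrite /piA /sA lsubst_comp. Qed.

Lemma piA_sA_id (K : Type) (E : finType) (A : {set E}) (t : lterm K (elems A)) :
  piA A (sA t) = t.
Proof.
by rewrite piA_sA -[RHS]lsubst_id; apply: lsubst_ext => a; rewrite piA_var_val.
Qed.

Lemma piA_sA_zero (K : fieldType) (E : finType) (A B : {set E}) Rel
  (t : lterm K (elems B)) :
  (#|A :&: B| <= 1)%N -> derived t -> lcong Rel (piA A (sA t)) LZero.
Proof.
move=> hc ht; rewrite piA_sA.
case: (set_0Vmem (A :&: B)) => [h0|[x0 hx0]].
- apply: (@onevar _ _ _ _ _ LZero) => // a; left.
  apply: piA_var_out; apply/negP => h.
  have : sval a \in A :&: B by rewrite inE h (svalP a).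
  by rewrite h0 inE.
- apply: (@onevar _ _ _ _ _ (piA_var K A x0)) => // a.
  case: (boolP (sval a \in A)) => h; last by left; apply: piA_var_out.
  right; have ha : sval a \in A :&: B by rewrite inE h (svalP a).
  by rewrite ((card_le1_eqP hc) _ _ ha hx0).
Qed.

Lemma piA_resp (K : fieldType) (E : finType) (Ar : {set {set E}})
  (HAr : set_arrangement Ar)
  (RA : forall A : {set E}, lterm K (elems A) -> Prop)
  (HRA : forall A, A \in Ar -> forall r, RA A r -> in_derived_free r) B :
  B \in Ar -> forall t u, lcong (Rtot Ar RA) t u -> lcong (RA B) (piA B t) (piA B u).
Proof.
move=> hB; apply: lsubst_cong => r [[A hA [r' hr' ->]]|[x [y [hxy ->]]]].
- case: (eqVneq A B) => [eAB|nAB].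
    subst A; rewrite -/(piA B (sA r')) piA_sA_id; exact: lc_rel.
  have [t [dt ct]] := HRA A hA r' hr'.
  rewrite -/(piA B (sA r')).
  transitivity (piA B (sA t)).
    rewrite !piA_sA; apply: lsubst_cong ct => //.
  apply: piA_sA_zero dt; apply: HAr.2 => //; by rewrite eq_sym.
- rewrite /=; case: (boolP (x \in B)) => hx.
    have hy : y \notin B by apply/negP => hy; apply: (hxy B hB).
    rewrite (piA_var_out _ hy); exact: l_br0r.
  rewrite (piA_var_out _ hx); exact: l_br0l.
Qed.

Lemma sA_resp (K : fieldType) (E : finType) (Ar : {set {set E}})
  (RA : forall A : {set E}, lterm K (elems A) -> Prop) A :
  A \in Ar -> forall t u, lcong (RA A) t u -> lcong (Rtot Ar RA) (sA t) (sA u).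
Proof.
move=> hA; apply: lsubst_cong => r hr; apply: lc_rel; left; exists A => //; by exists r.
Qed.

Definition Gp (K : fieldType) (E : finType) (Ar : {set {set E}})
  (RA : forall A : {set E}, lterm K (elems A) -> Prop) (z : lterm K E) : Prop :=
  exists w : forall A : {set E}, lterm K (elems A),
    (forall A, derived (w A)) /\ lcong (Rtot Ar RA) z (lsum (enum Ar) (fun A => sA (w A))).

Lemma Gp_cong (K : fieldType) (E : finType) (Ar : {set {set E}}) RA (z z' : lterm K E) :
  lcong (Rtot Ar RA) z z' -> Gp Ar RA z -> Gp Ar RA z'.
Proof. by move=> h [w [dw hw]]; exists w; split => //; rewrite -h. Qed.

Lemma Gp0 (K : fieldType) (E : finType) (Ar : {set {set E}}) RA :
  Gp Ar RA (@LZero K E).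
Proof.
exists (fun A => LZero); split => [A|]; first constructor.
symmetry; apply: lsum_zero => A _; reflexivity.
Qed.

Lemma Gp0' (K : fieldType) (E : finType) (Ar : {set {set E}}) RA (z : lterm K E) :
  lcong (Rtot Ar RA) z LZero -> Gp Ar RA z.
Proof. move=> h; apply: Gp_cong (Gp0 _ _); by symmetry. Qed.

Lemma Gp_add (K : fieldType) (E : finType) (Ar : {set {set E}}) RA (z z' : lterm K E) :
  Gp Ar RA z -> Gp Ar RA z' -> Gp Ar RA (LAdd z z').
Proof.
move=> [w [dw hw]] [w' [dw' hw']]; exists (fun A => LAdd (w A) (w' A)); split.
  by move=> A; constructor.
rewrite hw hw' -lsum_add; reflexivity.
Qed.

Lemma Gp_scale (K : fieldType) (E : finType) (Ar : {set {set E}}) RA k (z : lterm K E) :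
  Gp Ar RA z -> Gp Ar RA (LScale k z).
Proof.
move=> [w [dw hw]]; exists (fun A => LScale k (w A)); split.
  by move=> A; constructor.
rewrite hw -lsum_scale; reflexivity.
Qed.

Lemma Gp_var (K : fieldType) (E : finType) (Ar : {set {set E}}) RA
  (H : forall A, A \in Ar -> forall x : E, x \notin A ->
     forall t : lterm K (elems A), derived t ->
       lcong (Rtot Ar RA) (LBr (LVar x) (sA t)) LZero) x (z : lterm K E) :
  Gp Ar RA z -> Gp Ar RA (LBr (LVar x) z).
Proof.
move=> [w [dw hw]]; exists (fun A => LBr (piA_var K A x) (w A)); split.
  by move=> A; constructor.
rewrite hw lsum_brl; apply: lsum_ext_in => A; rewrite mem_enum => hA.
have -> : sA (LBr (piA_var K A x) (w A)) = LBr (sA (piA_var K A x)) (sA (w A)) by [].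
case: (boolP (x \in A)) => hx.
  rewrite sA_piA_var //; reflexivity.
rewrite piA_var_out // H //; symmetry; exact: l_br0l.
Qed.

Lemma Gp_anti (K : fieldType) (E : finType) (Ar : {set {set E}}) RA (t u : lterm K E) :
  Gp Ar RA (LBr t u) -> Gp Ar RA (LBr u t).
Proof. move=> h; apply: Gp_cong (Gp_scale (-1) h); symmetry; exact: l_anti. Qed.

Lemma Gp_ideal (K : fieldType) (E : finType) (Ar : {set {set E}}) RA
  (H : forall A, A \in Ar -> forall x : E, x \notin A ->
     forall t : lterm K (elems A), derived t ->
       lcong (Rtot Ar RA) (LBr (LVar x) (sA t)) LZero) (t : lterm K E) :
  forall z, Gp Ar RA z -> Gp Ar RA (LBr t z).
Proof.
elim: t => [x||a IHa b IHb|k a IHa|a IHa b IHb] z hz.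
- exact: Gp_var.
- apply: Gp0'; exact: l_br0l.
- apply: Gp_cong (Gp_add (IHa z hz) (IHb z hz)); symmetry; exact: lc_brDl.
- apply: Gp_cong (Gp_scale k (IHa z hz)); symmetry; exact: lc_brZl.
- apply: Gp_cong (Gp_add (IHa _ (IHb z hz)) (IHb _ (Gp_anti (IHa z hz)))).
  symmetry; exact: l_jacobi.
Qed.

Lemma Gp_varvar (K : fieldType) (E : finType) (Ar : {set {set E}}) RA
  (HAr : set_arrangement Ar) (x y : E) :
  Gp Ar RA (LBr (@LVar K E x) (LVar y)).
Proof.
case: (eqVneq x y) => [<-|nxy]; first by apply: Gp0'; exact: lc_brtt.
case: (boolP [exists A in Ar, (x \in A) && (y \in A)]) => [/existsP[A /and3P[hA hx hy]]|hn].
- exists (fun B => LBr (piA_var K B x) (piA_var K B y)); split; first by move=> B; constructor.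
  symmetry.
  rewrite (@lsum_single _ _ _ _ _ _ A) ?enum_uniq ?mem_enum //.
    have -> : sA (LBr (piA_var K A x) (piA_var K A y)) = LBr (sA (piA_var K A x)) (sA (piA_var K A y)) by [].
    rewrite !sA_piA_var //; reflexivity.
  move=> B; rewrite mem_enum => hB nBA.
  have -> : sA (LBr (piA_var K B x) (piA_var K B y)) = LBr (sA (piA_var K B x)) (sA (piA_var K B y)) by [].
  case: (boolP (x \in B)) => hxB; last by rewrite piA_var_out //; exact: l_br0l.
  case: (boolP (y \in B)) => hyB; last by rewrite (piA_var_out _ hyB); exact: l_br0r.
  have := HAr.2 B A hB hA nBA.
  move/card_le1_eqP => h.
  have := h x y; rewrite !inE hxB hyB hx hy => /(_ isT isT) exy.
  by rewrite exy eqxx in nxy.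
- apply: Gp0'; apply: lc_rel; right; exists x, y; split => // A hA [hx hy].
  move/existsP: hn; apply; exists A; by rewrite hA hx hy.
Qed.

Lemma Gp_br (K : fieldType) (E : finType) (Ar : {set {set E}}) RA
  (HAr : set_arrangement Ar)
  (H : forall A, A \in Ar -> forall x : E, x \notin A ->
     forall t : lterm K (elems A), derived t ->
       lcong (Rtot Ar RA) (LBr (LVar x) (sA t)) LZero) (u : lterm K E) :
  forall t, Gp Ar RA (LBr t u).
Proof.
elim: u => [y||a IHa b IHb|k a IHa|a IHa b IHb] t.
- elim: t => [x||a IHa b IHb|k a IHa|a IHa b IHb].
  + exact: Gp_varvar.
  + apply: Gp0'; exact: l_br0l.
  + apply: Gp_cong (Gp_add IHa IHb); symmetry; exact: lc_brDl.
  + apply: Gp_cong (Gp_scale k IHa); symmetry; exact: lc_brZl.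
  + apply: Gp_cong (Gp_add (Gp_ideal H a IHb) (Gp_ideal H b (Gp_anti IHa))).
    symmetry; exact: l_jacobi.
- apply: Gp0'; exact: l_br0r.
- apply: Gp_cong (Gp_add (IHa t) (IHb t)); symmetry; exact: lc_brDr.
- apply: Gp_cong (Gp_scale k (IHa t)); symmetry; exact: lc_brZr.
- exact: (Gp_ideal H t (IHb a)).
Qed.

Lemma Gp_der (K : fieldType) (E : finType) (Ar : {set {set E}}) RA
  (HAr : set_arrangement Ar)
  (H : forall A, A \in Ar -> forall x : E, x \notin A ->
     forall t : lterm K (elems A), derived t ->
       lcong (Rtot Ar RA) (LBr (LVar x) (sA t)) LZero) (z : lterm K E) :
  derived z -> Gp Ar RA z.
Proof.
elim=> [|a b _ ha _ hb|k a _ ha|a b].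
- exact: Gp0.
- exact: Gp_add.
- exact: Gp_scale.
- exact: Gp_br.
Qed.

Theorem mainTheorem1 (K : fieldType) (E : finType) (Ar : {set {set E}})
  (HAr : set_arrangement Ar)
  (RA : forall A : {set E}, lterm K (elems A) -> Prop)
  (HRA : forall A, A \in Ar -> forall r, RA A r -> in_derived_free r) :
  (* I = 0 : every element of L' killed by all pi_A' is zero *)
  (forall z : lterm K E, derived z ->
     (forall A, A \in Ar -> lcong (RA A) (piA A z) LZero) ->
     lcong (Rtot Ar RA) z LZero)
  <->
  (forall A, A \in Ar -> forall x : E, x \notin A ->
     forall t : lterm K (elems A), derived t ->
       lcong (Rtot Ar RA) (LBr (LVar x) (sA t)) LZero).
Proof.
split.
- move=> HI A hA x hx t dt; apply: HI; first exact: der_br.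
  move=> B hB.
  have -> : piA B (LBr (LVar x) (sA t)) = LBr (piA_var K B x) (piA B (sA t)) by [].
  case: (eqVneq B A) => [eBA|nBA].
    subst B; rewrite piA_var_out //; exact: l_br0l.
  rewrite (piA_sA_zero _ (HAr.2 B A hB hA nBA) dt); exact: l_br0r.
- move=> H z dz hz.
  have [w [dw hw]] := Gp_der HAr H dz.
  rewrite hw; apply: lsum_zero => A; rewrite mem_enum => hA.
  have hwA : lcong (RA A) (w A) LZero.
    rewrite -(hz A hA).
    have := piA_resp HAr HRA hA hw.
    rewrite /piA lsubst_lsum -/(piA A _) => ->.
    symmetry.
    rewrite (@lsum_single _ _ _ _ _ _ A) ?enum_uniq ?mem_enum //.
      rewrite -/(piA A (sA (w A))) piA_sA_id; reflexivity.
    move=> B; rewrite mem_enum => hB nBA.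
    apply: piA_sA_zero (dw B); apply: HAr.2 => //; by rewrite eq_sym.
  have := sA_resp hA hwA; done.
Qed.
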